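(* For all $\varepsilon,\varepsilon'\in\mathbb R$ the Lie algebras $\mathfrak g_\varepsilon$ and $\mathfrak g_{\varepsilon'}$ are isomorphic, but the metric Lie algebras $(\mathfrak g_\varepsilon,\langle\cdot,\cdot\rangle)$ and $(\mathfrak g_{\varepsilon'},\langle\cdot,\cdot\rangle)$ are isometrically isomorphic (i.e. there is a Lie algebra isomorphism preserving the inner products) if and only if $\varepsilon=\varepsilon'$.
   Context: For $\varepsilon\in\mathbb R$, $\mathfrak g_\varepsilon$ is the Lie algebra with basis $e_1,\dots,e_7$ and nonzero brackets $[e_1,e_5]=\tfrac12e_1$, $[e_2,e_5]=-\tfrac12e_2$, $[e_2,e_6]=-\tfrac12e_1$, $[e_3,e_5]=2e_3$, $[e_3,e_7]=-\tfrac12e_1$, $[e_4,e_5]=-e_2$, $[e_4,e_6]=-e_1$, $[e_5,e_6]=-\varepsilon e_2-2e_4-e_6$, $[e_5,e_7]=-\varepsilon e_3+\tfrac32e_7$, $[e_6,e_7]=-\sqrt2e_2$. With dual basis $e^i$, $\langle\cdot,\cdot\rangle=2(e^1\cdot e^5+e^2\cdot e^6+e^3\cdot e^7)-(e^4)^2$, an inner product of signature $(4,3)$ on $\mathfrak g_\varepsilon$. *)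

(* Defs.v *)
From mathcomp Require Import all_boot all_order all_algebra.
From mathcomp Require Import reals.
Set Implicit Arguments. Unset Strict Implicit. Unset Printing Implicit Defensive.
Import Order.TTheory GRing.Theory Num.Theory.
Local Open Scope ring_scope.

Section LieDefs.
Variable R : realType.

(* Vectors of g_eps are row vectors of length 7; the basis vector e_{k+1}
   is [ebase k] (indices shifted by one: e1 <-> 0, ..., e7 <-> 6). *)
Definition vec := 'rV[R]_7.
Definition ebase (k : 'I_7) : vec := delta_mx 0 k.
Definition eb (k : nat) : vec := ebase (inord k).

(* Brackets [e_{i+1}, e_{j+1}] for i < j (0-based indices). *)
Definition cpos (eps : R) (i j : nat) : vec :=
  match i, j with
  | 0, 4 => (1/2) *: eb 0
  | 1, 4 => - (1/2) *: eb 1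
  | 1, 5 => - (1/2) *: eb 0
  | 2, 4 => 2 *: eb 2
  | 2, 6 => - (1/2) *: eb 0
  | 3, 4 => - eb 1
  | 3, 5 => - eb 0
  | 4, 5 => - (eps *: eb 1) - 2 *: eb 3 - eb 5
  | 4, 6 => - (eps *: eb 2) + (3/2) *: eb 6
  | 5, 6 => - (Num.sqrt 2 *: eb 1)
  | _, _ => 0
  end.

Definition sconst (eps : R) (i j : 'I_7) : vec :=
  if (i < j)%N then cpos eps i j
  else if (j < i)%N then - cpos eps j i else 0.

Definition lieb (eps : R) (x y : vec) : vec :=
  \sum_(i < 7) \sum_(j < 7) (x 0 i * y 0 j) *: sconst eps i j.

(* <.,.> = 2(e^1.e^5 + e^2.e^6 + e^3.e^7) - (e^4)^2, with the symmetric
   product e^a.e^b = (e^a (x) e^b + e^b (x) e^a)/2. *)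
Definition ip (x y : vec) : R :=
  let c k := (x 0 (inord k) * y 0 (inord k))%R in
  let s a b := (x 0 (inord a) * y 0 (inord b) + x 0 (inord b) * y 0 (inord a))%R in
  s 0 4 + s 1 5 + s 2 6 - c 3.

Definition lie_iso_mx (eps eps' : R) (A : 'M[R]_7) : Prop :=
  A \in unitmx /\
  forall x y : vec, lieb eps' (x *m A) (y *m A) = lieb eps x y *m A.

Definition lie_isomorphic (eps eps' : R) : Prop :=
  exists A : 'M[R]_7, lie_iso_mx eps eps' A.

Definition metric_lie_isomorphic (eps eps' : R) : Prop :=
  exists A : 'M[R]_7, lie_iso_mx eps eps' A /\
    forall x y : vec, ip (x *m A) (y *m A) = ip x y.

End LieDefs.

(* Main.v *)
Require Import Defs.
From mathcomp Require Import all_boot all_order all_algebra.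
From mathcomp Require Import reals.
From mathcomp Require Import ring lra.
Set Implicit Arguments. Unset Strict Implicit. Unset Printing Implicit Defensive.
Import Order.TTheory GRing.Theory Num.Theory.
Local Open Scope ring_scope.

Section S.
Variable R : realType.


Lemma sum7 (V : zmodType) (F : 'I_7 -> V) : \sum_(i < 7) F i =
  F (inord 0) + F (inord 1) + F (inord 2) + F (inord 3) + F (inord 4) + F (inord 5) + F (inord 6).
Proof.
rewrite !big_ord_recr big_ord0 /= add0r.
by do ![congr (_ + _) | congr F; apply/val_inj; rewrite /= inordK].
Qed.

Lemma inord_eq (i j : nat) : (i < 7)%N -> (j < 7)%N -> ((inord i : 'I_7) == inord j) = (i == j).
Proof. by move=> hi hj; apply/eqP/eqP => [h|->//]; rewrite -(inordK hi) -(inordK hj) h. Qed.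

Lemma ebE (i k : nat) : (i < 7)%N -> (k < 7)%N -> (eb R i) 0 (inord k) = (i == k)%:R.
Proof. by move=> hi hk; rewrite /eb /ebase mxE eqxx inord_eq /= 1?eq_sym. Qed.

Lemma ebA (i : nat) (A : 'M[R]_7) m : (i < 7)%N -> (eb R i *m A) 0 m = A (inord i) m.
Proof.
move=> hi; rewrite mxE (bigD1 (inord i)) //= big1 ?addr0.
  by rewrite /eb /ebase mxE !eqxx mul1r.
by move=> j hj; rewrite /eb /ebase mxE (negbTE hj) andbF mul0r.
Qed.

Lemma sconstE (E : R) i j : (i < 7)%N -> (j < 7)%N ->
  sconst E (inord i) (inord j) = if (i < j)%N then cpos E i j else if (j < i)%N then - cpos E j i else 0.
Proof. by move=> hi hj; rewrite /sconst !inordK. Qed.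

Definition lbf (E : R) (x y : nat -> R) (k : nat) : R :=
  let w i j := x i * y j - x j * y i in
  match k with
  | 0 => (1/2) * w 0%N 4%N - (1/2) * w 1%N 5%N - (1/2) * w 2%N 6%N - w 3%N 5%N
  | 1 => - (1/2) * w 1%N 4%N - w 3%N 4%N - E * w 4%N 5%N - Num.sqrt 2 * w 5%N 6%N
  | 2 => 2 * w 2%N 4%N - E * w 4%N 6%N
  | 3 => -2 * w 4%N 5%N
  | 4 => 0
  | 5 => - w 4%N 5%N
  | 6 => (3/2) * w 4%N 6%N
  | _ => 0
  end.

Lemma lieb_coord (E : R) x y k : (k < 7)%N ->
  lieb E x y 0 (inord k) = lbf E (fun m => x 0 (inord m)) (fun m => y 0 (inord m)) k.
Proof.
move=> hk; rewrite /lieb !sum7 !mxE !sconstE //= !mxE.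

do 7?[case: k hk => [|k] hk]; rewrite /lbf ?inord_eq //=; ring.
Qed.


Definition Aent (c d : R) (i j : nat) : R :=
  if i == j then 1 else if (i == 5%N) && (j == 1%N) then c
  else if (i == 6%N) && (j == 2%N) then d else 0.
Definition Amx (c d : R) : 'M[R]_7 := \matrix_(i, j) Aent c d i j.

Lemma iso_eq (E E' : R) (x y : vec R) :
  lieb E' (x *m Amx (2 * (E' - E) / 3) (2 * (E - E') / 7)) (y *m Amx (2 * (E' - E) / 3) (2 * (E - E') / 7))
  = lieb E x y *m Amx (2 * (E' - E) / 3) (2 * (E - E') / 7).
Proof.
apply/rowP => k; rewrite -[k]inord_val.
have := ltn_ord k; move: (nat_of_ord k) => n hn.
rewrite lieb_coord // [in RHS]mxE sum7 !lieb_coord //.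
do 7?[case: n hn => [|n] hn]; rewrite /lbf /= ?mxE ?sum7 ?mxE ?inordK //= /Aent /=.
all: try field.
all: done.
Qed.


Definition dl (i m : nat) : R := (i == m)%:R.
Definition dsum (f : nat -> R) : R := f 0%N + f 1%N + f 2%N + f 3%N + f 4%N + f 5%N + f 6%N.
Definition ipf (x y : nat -> R) : R :=
  (x 0%N * y 4%N + x 4%N * y 0%N) + (x 1%N * y 5%N + x 5%N * y 1%N)
  + (x 2%N * y 6%N + x 6%N * y 2%N) - x 3%N * y 3%N.

Lemma lieb_coord' (E : R) (x y : vec R) (fx fy : nat -> R) k : (k < 7)%N ->
  (forall m, (m < 7)%N -> x 0 (inord m) = fx m) ->
  (forall m, (m < 7)%N -> y 0 (inord m) = fy m) ->
  lieb E x y 0 (inord k) = lbf E fx fy k.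
Proof.
move=> hk hx hy; rewrite lieb_coord //.
by do 7?[case: k hk => [|k] hk]; rewrite /lbf /= ?hx ?hy.
Qed.

Lemma extract (E E' : R) (A : 'M[R]_7) :
  lie_iso_mx E E' A -> (forall x y : vec R, ip (x *m A) (y *m A) = ip x y) ->
  (forall i j k, (i < 7)%N -> (j < 7)%N -> (k < 7)%N ->
     lbf E' (fun m => A (inord i) (inord m)) (fun m => A (inord j) (inord m)) k
     = dsum (fun m => lbf E (dl i) (dl j) m * A (inord m) (inord k))) /\
  (forall i j, (i < 7)%N -> (j < 7)%N ->
     ipf (fun m => A (inord i) (inord m)) (fun m => A (inord j) (inord m)) = ipf (dl i) (dl j)).
Proof.
move=> [_ HA] Hip; split.
  move=> i j k hi hj hk.
  have := congr1 (fun v : vec R => v 0 (inord k)) (HA (eb R i) (eb R j)).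
  rewrite /= (@lieb_coord' E' _ _ (fun m => A (inord i) (inord m)) (fun m => A (inord j) (inord m))) //;
    last 2 first.
  - by move=> m _; rewrite ebA.
  - by move=> m _; rewrite ebA.
  move=> ->; rewrite mxE sum7 /dsum.
  by rewrite !(@lieb_coord' E _ _ (dl i) (dl j)) // => m hm; rewrite ebE.
move=> i j hi hj; have := Hip (eb R i) (eb R j).
rewrite /ip !ebA // !ebE //.
Qed.


Lemma mul0 (a b : R) : a != 0 -> a * b = 0 -> b = 0.
Proof. by move=> ha /eqP; rewrite mulf_eq0 (negbTE ha) => /eqP. Qed.

Lemma key (E E' : R) (X : nat -> nat -> R) :
  (forall i j k, (i < 7)%N -> (j < 7)%N -> (k < 7)%N ->
     lbf E' (X i) (X j) k = dsum (fun m => lbf E (dl i) (dl j) m * X m k)) ->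
  (forall i j, (i < 7)%N -> (j < 7)%N -> ipf (X i) (X j) = ipf (dl i) (dl j)) ->
  E = E'.
Proof.
move=> hB hI.
have hs : Num.sqrt 2 != 0 :> R by rewrite gt_eqF // sqrtr_gt0 ltr0n.
have b044 := hB 0%N 4%N 4%N isT isT isT.
have b144 := hB 1%N 4%N 4%N isT isT isT.
have b244 := hB 2%N 4%N 4%N isT isT isT.
have b464 := hB 4%N 6%N 4%N isT isT isT.
have b454 := hB 4%N 5%N 4%N isT isT isT.
have b262 := hB 2%N 6%N 2%N isT isT isT.
have b263 := hB 2%N 6%N 3%N isT isT isT.
have b265 := hB 2%N 6%N 5%N isT isT isT.
have b266 := hB 2%N 6%N 6%N isT isT isT.
have b362 := hB 3%N 6%N 2%N isT isT isT.
have b363 := hB 3%N 6%N 3%N isT isT isT.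
have b365 := hB 3%N 6%N 5%N isT isT isT.
have b366 := hB 3%N 6%N 6%N isT isT isT.
have b562 := hB 5%N 6%N 2%N isT isT isT.
have b563 := hB 5%N 6%N 3%N isT isT isT.
have b565 := hB 5%N 6%N 5%N isT isT isT.
have b566 := hB 5%N 6%N 6%N isT isT isT.
have b040 := hB 0%N 4%N 0%N isT isT isT.
have b041 := hB 0%N 4%N 1%N isT isT isT.
have b140 := hB 1%N 4%N 0%N isT isT isT.
have b141 := hB 1%N 4%N 1%N isT isT isT.
have b243 := hB 2%N 4%N 3%N isT isT isT.
have b245 := hB 2%N 4%N 5%N isT isT isT.
have b246 := hB 2%N 4%N 6%N isT isT isT.
have b241 := hB 2%N 4%N 1%N isT isT isT.
have b240 := hB 2%N 4%N 0%N isT isT isT.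
have b463 := hB 4%N 6%N 3%N isT isT isT.
have b465 := hB 4%N 6%N 5%N isT isT isT.
have b462 := hB 4%N 6%N 2%N isT isT isT.
have b561 := hB 5%N 6%N 1%N isT isT isT.
have b341 := hB 3%N 4%N 1%N isT isT isT.
have b453 := hB 4%N 5%N 3%N isT isT isT.
have i04 := hI 0%N 4%N isT isT.
have i14 := hI 1%N 4%N isT isT.
have i15 := hI 1%N 5%N isT isT.
have i03 := hI 0%N 3%N isT isT.
have i12 := hI 1%N 2%N isT isT.
have i13 := hI 1%N 3%N isT isT.
have i16 := hI 1%N 6%N isT isT.
have i26 := hI 2%N 6%N isT isT.
have i24 := hI 2%N 4%N isT isT.
have i66 := hI 6%N 6%N isT isT.
have i36 := hI 3%N 6%N isT isT.
have i23 := hI 2%N 3%N isT isT.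
have i33 := hI 3%N 3%N isT isT.
have i35 := hI 3%N 5%N isT isT.
rewrite /lbf /dsum /dl /ipf /= in b044 b144 b244 b464 b454 b262 b263 b265 b266 b362 b363 b365 b366 b562 b563 b565 b566 b040 b041 b140 b141 b243 b245 b246 b241 b240 b463 b465 b462 b561 b341 b453 i04 i14 i15 i03 i12 i13 i16 i26 i24 i66 i36 i23 i33 i35.
clear hB hI.
set (x00 := X 0%N 0%N) in *.
set (x01 := X 0%N 1%N) in *.
set (x02 := X 0%N 2%N) in *.
set (x03 := X 0%N 3%N) in *.
set (x04 := X 0%N 4%N) in *.
set (x05 := X 0%N 5%N) in *.
set (x06 := X 0%N 6%N) in *.
set (x10 := X 1%N 0%N) in *.
set (x11 := X 1%N 1%N) in *.
set (x12 := X 1%N 2%N) in *.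
set (x13 := X 1%N 3%N) in *.
set (x14 := X 1%N 4%N) in *.
set (x15 := X 1%N 5%N) in *.
set (x16 := X 1%N 6%N) in *.
set (x20 := X 2%N 0%N) in *.
set (x21 := X 2%N 1%N) in *.
set (x22 := X 2%N 2%N) in *.
set (x23 := X 2%N 3%N) in *.
set (x24 := X 2%N 4%N) in *.
set (x25 := X 2%N 5%N) in *.
set (x26 := X 2%N 6%N) in *.
set (x30 := X 3%N 0%N) in *.
set (x31 := X 3%N 1%N) in *.
set (x32 := X 3%N 2%N) in *.
set (x33 := X 3%N 3%N) in *.
set (x34 := X 3%N 4%N) in *.
set (x35 := X 3%N 5%N) in *.
set (x36 := X 3%N 6%N) in *.
set (x40 := X 4%N 0%N) in *.
set (x41 := X 4%N 1%N) in *.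
set (x42 := X 4%N 2%N) in *.
set (x43 := X 4%N 3%N) in *.
set (x44 := X 4%N 4%N) in *.
set (x45 := X 4%N 5%N) in *.
set (x46 := X 4%N 6%N) in *.
set (x50 := X 5%N 0%N) in *.
set (x51 := X 5%N 1%N) in *.
set (x52 := X 5%N 2%N) in *.
set (x53 := X 5%N 3%N) in *.
set (x54 := X 5%N 4%N) in *.
set (x55 := X 5%N 5%N) in *.
set (x56 := X 5%N 6%N) in *.
set (x60 := X 6%N 0%N) in *.
set (x61 := X 6%N 1%N) in *.
set (x62 := X 6%N 2%N) in *.
set (x63 := X 6%N 3%N) in *.
set (x64 := X 6%N 4%N) in *.
set (x65 := X 6%N 5%N) in *.
set (x66 := X 6%N 6%N) in *.
clearbody x00 x01 x02 x03 x04 x05 x06 x10 x11 x12 x13 x14 x15 x16 x20 x21 x22 x23 x24 x25 x26 x30 x31 x32 x33 x34 x35 x36 x40 x41 x42 x43 x44 x45 x46 x50 x51 x52 x53 x54 x55 x56 x60 x61 x62 x63 x64 x65 x66.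
clear X.

have e04 : x04 = 0 by clear -b044; lra. subst x04.
have e14 : x14 = 0 by clear -b144; lra. subst x14.
have e24 : x24 = 0 by clear -b244; lra. subst x24.
have e64 : x64 = 0 by clear -b464; lra. subst x64.
have e54 : x54 = -2 * x34 by clear -b454; lra. subst x54.
have e02 : x02 = 0 by clear -b262; lra. subst x02.
have e03 : x03 = 0 by clear -b263; lra. subst x03.
have e05 : x05 = 0 by clear -b265; lra. subst x05.
have e06 : x06 = 0 by clear -b266; lra. subst x06.
have e12 : x12 = 0 by apply: (mul0 hs); clear -b362 b562; lra. subst x12.
have e13 : x13 = 0 by apply: (mul0 hs); clear -b363 b563; lra. subst x13.
have e15 : x15 = 0 by apply: (mul0 hs); clear -b365 b565; lra. subst x15.
have e16 : x16 = 0 by apply: (mul0 hs); clear -b366 b566; lra. subst x16.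
have n44 : x44 + 1 != 0.
  apply/eqP => h; have h44 : x44 = -1 by clear -h; lra.
  subst x44; have h11 : x11 = 0 by clear -b141; lra.
  subst x11; have h10 : x10 = 0 by clear -i14; lra.
  subst x10; clear -i15; lra.
have e01 : x01 = 0 by apply: (mul0 n44); clear -b041; lra. subst x01.
have e00 : x00 = 1 by clear -i04 b040; lra. subst x00.
have e44 : x44 = 1 by clear -i04; lra. subst x44.
have e10 : x10 = 0 by clear -b140 i14; lra. subst x10.
have s0 : x11 != 0 by apply/eqP => h; subst x11; clear -i15; lra.
have e34 : x34 = 0 by clear -i03; lra. subst x34.
have e25 : x25 = 0 by apply: (mul0 s0); clear -i12; lra. subst x25.
have e35 : x35 = 0 by apply: (mul0 s0); clear -i13; lra. subst x35.
have e45 : x45 = 0 by apply: (mul0 s0); clear -i14; lra. subst x45.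
have e65 : x65 = 0 by apply: (mul0 s0); clear -i16; lra. subst x65.
have e23 : x23 = 0 by clear -b243 b245; lra. subst x23.
have e63 : x63 = 0 by clear -b463 b465; lra. subst x63.
have e26 : x26 = 0 by clear -b246; lra. subst x26.
have e21 : x21 = 0 by clear -b241; lra. subst x21.
have e20 : x20 = 0 by clear -b240 i24; lra. subst x20.
have n22 : x22 != 0 by apply/eqP => h; subst x22; clear -i26; lra.
have n66 : x66 != 0 by apply/eqP => h; subst x66; clear -i26; lra.
have e46 : x46 = 0 by apply: (mul0 n22); clear -i24; lra. subst x46.
have e62 : x62 = 0 by apply: (mul0 n66); clear -i66; lra. subst x62.
have h5566 : x55 * x66 = x11.
  by apply/eqP; rewrite -subr_eq0; apply/eqP; apply: (mul0 hs); clear -b561; lra.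
have hE : E' * x66 = E * x22 by clear -b462; lra.
have e32 : x32 = 0 by apply: (mul0 n66); clear -i36; lra. subst x32.
have e36 : x36 = 0 by apply: (mul0 n22); clear -i23; lra. subst x36.
have e31 : x31 = 2 * x11 - 2 * x33 by clear -b341; lra. subst x31.
have e53 : x53 = 2 * x55 - 2 * x33 by clear -b453; lra. subst x53.
have h33 : x33 * x33 = 1 by clear -i33; lra.
have h15 : x11 * x55 = 1 by clear -i15; lra.
have h3355 : x33 * x55 = 1 by clear -i35 h15 h33; lra.
have n55 : x55 != 0 by apply/eqP => h; subst x55; clear -h15; lra.
have e11 : x11 = x33.
  by apply/eqP; rewrite -subr_eq0; apply/eqP; apply: (mul0 n55); clear -h15 h3355; lra.
have e66 : x66 = x33 * x33.
  apply/eqP; rewrite -subr_eq0; apply/eqP.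
  have -> : x66 - x33 * x33 = x66 * (1 - x33 * x55) + x33 * (x55 * x66 - x33) by ring.
  by rewrite h3355 h5566 e11 !subrr !mulr0 addr0.
rewrite h33 in e66; subst x66.
have e22 : x22 = 1 by clear -i26; lra. subst x22.
clear -hE; lra.
Qed.

Lemma Amx_inv (c d : R) : Amx c d *m Amx (-c) (-d) = 1%:M.
Proof.
apply/matrixP => i j; rewrite -[i]inord_val -[j]inord_val.
have := ltn_ord i; have := ltn_ord j.
move: (nat_of_ord i) (nat_of_ord j) => a b hb ha.
rewrite !mxE sum7 !mxE !inordK // inord_eq //.
do 7?[case: a ha => [|a] ha]; do 7?[case: b hb => [|b] hb]; rewrite /Aent //=; ring.
Qed.
End S.

Theorem mainTheorem15 (R : realType) (eps eps' : R) :
  lie_isomorphic eps eps' /\ (metric_lie_isomorphic eps eps' <-> eps = eps').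
Proof.
split.
  exists (Amx (2 * (eps' - eps) / 3) (2 * (eps - eps') / 7)); split; last exact: iso_eq.
  by case: (mulmx1_unit (Amx_inv (2 * (eps' - eps) / 3) (2 * (eps - eps') / 7))).
split.
  case=> A [HA Hip]; have [hB hI] := extract HA Hip.
  exact: (@key R eps eps' (fun i m => A (inord i) (inord m)) hB hI).
move=> <-; exists 1%:M; split; last by move=> x y; rewrite !mulmx1.
by split; [exact: unitmx1 | move=> x y; rewrite !mulmx1].
Qed.
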